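(* Let $t\ge 2$ be an integer and let $M$ be a $t$-spike of order at least $4t-4$. Then $M$ is $(2t-1)$-connected.
   Context: For a positive integer $t$, a matroid $M$ is a $t$-spike of order $r$ (where $r\ge t$) if there is a partition $(A_1,\ldots,A_r)$ of $E(M)$ into 2-element sets such that, for every $t$-element subset $J\subseteq\{1,\dots,r\}$, the set $\bigcup_{j\in J}A_j$ is both a circuit and a cocircuit of $M$. The connectivity function of $M$ with ground set $E$ is $\lambda(X)=r(X)+r(E-X)-r(M)$. A partition $(X,E-X)$ is a $k$-separation if $\lambda(X)<k$, $|X|\ge k$ and $|E-X|\ge k$; $M$ is $n$-connected if it has no $k$-separation for any $k<n$. *)

(* Defs.v *)
From mathcomp Require Import all_boot.
Set Implicit Arguments. Unset Strict Implicit. Unset Printing Implicit Defensive.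

(* A matroid on ground set E = [set: T], given by its independent sets. *)
Record matroid (T : finType) := Matroid {
  indep : pred {set T};
  indep0 : indep set0;
  indep_sub : forall I J : {set T}, J \subset I -> indep I -> indep J;
  indep_aug : forall I J : {set T}, indep I -> indep J -> #|I| < #|J| ->
                exists2 x, x \in J :\: I & indep (x |: I)
}.

Section MatroidNotions.
Variables (T : finType) (M : matroid T).

Definition rk (X : {set T}) : nat :=
  \max_(Y : {set T} | (Y \subset X) && indep M Y) #|Y|.

Definition rkM : nat := rk [set: T].

Definition dependent (X : {set T}) : bool := ~~ indep M X.

Definition circuit (C : {set T}) : bool :=
  dependent C && [forall D : {set T}, (D \proper C) ==> indep M D].

(* coindependent: independent in the dual matroid, i.e. E - X is spanning *)
Definition coindep (X : {set T}) : bool := rk (~: X) == rkM.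

(* cocircuit: circuit of the dual matroid, i.e. minimal non-coindependent set *)
Definition cocircuit (C : {set T}) : bool :=
  ~~ coindep C && [forall D : {set T}, (D \proper C) ==> coindep D].

Definition conn (X : {set T}) : nat := rk X + rk (~: X) - rkM.

Definition separation (k : nat) (X : {set T}) : bool :=
  [&& conn X < k, k <= #|X| & k <= #|~: X|].

Definition n_connected (n : nat) : Prop :=
  forall (k : nat) (X : {set T}), k < n -> ~~ separation k X.

Definition spike (t : nat) {r : nat} (A : 'I_r -> {set T}) : Prop :=
  [/\ t <= r,
      (forall i, #|A i| = 2),
      (forall i j, i != j -> [disjoint A i & A j]),
      \bigcup_(i < r) A i = [set: T] &
      (forall J : {set 'I_r}, #|J| = t ->
         circuit (\bigcup_(j in J) A j) /\ cocircuit (\bigcup_(j in J) A j))].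

Definition is_spike (t r : nat) : Prop :=
  exists A : 'I_r -> {set T}, spike t A.

End MatroidNotions.

(* Main.v *)
Require Import Defs.
From mathcomp Require Import all_boot.
From mathcomp Require Import zify.
Set Implicit Arguments. Unset Strict Implicit. Unset Printing Implicit Defensive.

Lemma rk_witness (T : finType) (M : matroid T) (X : {set T}) :
  exists2 Y : {set T}, (Y \subset X) && indep M Y & rk M X = #|Y|.
Proof.
pose P := [pred Y : {set T} | (Y \subset X) && indep M Y].
have h : 0 < #|P|.
  apply/card_gt0P; exists set0; by rewrite inE sub0set indep0.
case: (eq_bigmax_cond (fun Y : {set T} => #|Y|) h) => Y HY E.
exists Y; first by rewrite inE in HY.
rewrite /rk -E; apply: eq_bigl => Z; by rewrite inE.
Qed.

Lemma rk_le_card (T : finType) (M : matroid T) (X : {set T}) : rk M X <= #|X|.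
Proof. apply/bigmax_leqP => Y /andP[sub _]; exact: subset_leq_card. Qed.

Lemma indep_le_rk (T : finType) (M : matroid T) (I X : {set T}) :
  I \subset X -> indep M I -> #|I| <= rk M X.
Proof. move=> s i; rewrite /rk; apply: (leq_bigmax_cond I); by rewrite s i. Qed.

Lemma rk_indep (T : finType) (M : matroid T) (X : {set T}) :
  indep M X -> rk M X = #|X|.
Proof. move=> i; apply/eqP; rewrite eqn_leq rk_le_card; exact: indep_le_rk. Qed.

Lemma rk_dep (T : finType) (M : matroid T) (X : {set T}) :
  ~~ indep M X -> rk M X < #|X|.
Proof.
move=> d; case: (rk_witness M X) => Y /andP[s i] e.
rewrite ltn_neqAle rk_le_card andbT e; apply/negP => /eqP h.
have : Y == X by rewrite eqEcard s h leqnn.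
move/eqP => hh; by rewrite -hh i in d.
Qed.

Lemma rk_mono (T : finType) (M : matroid T) (X Y : {set T}) :
  X \subset Y -> rk M X <= rk M Y.
Proof.
move=> s; case: (rk_witness M X) => Z /andP[sz iz] ->.
apply: indep_le_rk => //; exact: subset_trans s.
Qed.

Lemma rk_extend (T : finType) (M : matroid T) (S : {set T}) : forall n (I : {set T}),
  rk M S - #|I| = n -> I \subset S -> indep M I ->
  exists J : {set T}, [/\ I \subset J, J \subset S, indep M J & #|J| = rk M S].
Proof.
elim=> [|n IH] I hn sI iI.
  exists I; split => //; apply/eqP; rewrite eqn_leq (indep_le_rk sI iI) /=; lia.
case: (rk_witness M S) => B /andP[sB iB] eB.
have lt : #|I| < #|B| by lia.
case: (indep_aug iI iB lt) => x /setDP[xB xI] ix.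
have sx : x |: I \subset S by rewrite subUset sub1set (subsetP sB) .
case: (IH (x |: I)) => //.
  by rewrite cardsU1 xI; lia.
move=> J [h1 h2 h3 h4]; exists J; split => //.
apply: subset_trans h1; exact: subsetUr.
Qed.

Lemma rk_submod (T : finType) (M : matroid T) (X Y : {set T}) :
  rk M (X :|: Y) + rk M (X :&: Y) <= rk M X + rk M Y.
Proof.
case: (rk_witness M (X :&: Y)) => I /andP[sI iI] eI.
have sI' : I \subset X :|: Y.
  apply: subset_trans sI _; apply: subset_trans (subsetIl _ _) (subsetUl _ _).
case: (rk_extend (erefl _) sI' iI) => J [h1 h2 h3 h4].
have rX : #|J :&: X| <= rk M X.
  apply: indep_le_rk; [exact: subsetIr| exact: (indep_sub (subsetIl _ _) h3)].
have rY : #|J :&: Y| <= rk M Y.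
  apply: indep_le_rk; [exact: subsetIr| exact: (indep_sub (subsetIl _ _) h3)].
have U : (J :&: X) :|: (J :&: Y) = J.
  by rewrite -setIUr; apply/setIidPl.
have II : #|I| <= #|(J :&: X) :&: (J :&: Y)|.
  apply: subset_leq_card; rewrite setIACA setIid subsetI h1.
  done.
have := cardsUI (J :&: X) (J :&: Y); rewrite U; lia.
Qed.

Lemma rk_add1 (T : finType) (M : matroid T) (x : T) (S : {set T}) :
  rk M (x |: S) <= rk M S + 1.
Proof.
have := rk_submod M [set x] S.
have := rk_le_card M [set x]; rewrite cards1; lia.
Qed.

Lemma rk_circuit (T : finType) (M : matroid T) (C S : {set T}) (e : T) :
  circuit M C -> e \in C -> C \subset S -> rk M S <= rk M (S :\ e).
Proof.
move=> /andP[dC /forallP pC] eC sCS.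
have := rk_submod M (S :\ e) C.
have h1 : rk M S <= rk M ((S :\ e) :|: C).
  apply: rk_mono; apply/subsetP => z zS; rewrite !inE.
  case: (eqVneq z e) => [->|]; by rewrite ?eC ?zS ?orbT.
have iCe : indep M (C :\ e) by have := pC (C :\ e); rewrite properD1 //.
have h2 : rk M (C :\ e) <= rk M ((S :\ e) :&: C).
  apply: rk_mono; apply/subsetP => z; rewrite !inE => /andP[-> zC].
  by rewrite zC (subsetP sCS).
have h3 := rk_dep dC.
have h4 := rk_indep iCe.
have h5 := cardsD1 e C; rewrite eC in h5.
lia.
Qed.

Lemma rk_cocircuit (T : finType) (M : matroid T) (D W : {set T}) (e : T) :
  cocircuit M D -> e \in D -> e \in W -> W :&: D \subset [set e] ->
  rk M (W :\ e) < rk M W.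
Proof.
move=> /andP[nD /forallP pD] eD eW sWD.
have cDe : coindep M (D :\ e) by have := pD (D :\ e); rewrite properD1 //.
move: nD cDe; rewrite /coindep => nD /eqP cDe.
have lM : rk M (~: D) <= rkM M by apply: rk_mono; exact: subsetT.
have := rk_submod M (~: D) W.
have h1 : rk M (~: (D :\ e)) <= rk M (~: D :|: W).
  apply: rk_mono; apply/subsetP => z; rewrite !inE negb_and negbK.
  case/orP => [/eqP->|->]; by rewrite ?eW ?orbT.
have h2 : rk M (W :\ e) <= rk M (~: D :&: W).
  apply: rk_mono; apply/subsetP => z; rewrite !inE => /andP[ze zW].
  rewrite zW andbT; apply/negP => zD.
  have : z \in [set e] by apply: (subsetP sWD); rewrite inE zW zD.
  by rewrite inE (negbTE ze).
have : rk M (~: D) != rkM M by [].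
lia.
Qed.

Lemma subset_card (I : finType) (B : {set I}) : forall k, k <= #|B| ->
  exists K : {set I}, K \subset B /\ #|K| = k.
Proof.
elim=> [|k IH] hk; first by exists set0; rewrite sub0set cards0.
case: (IH (ltnW hk)) => K [sK cK].
have : 0 < #|B :\: K| by rewrite cardsDS //; lia.
case/card_gt0P => x /setDP[xB xK].
exists (x |: K); rewrite cardsU1 xK cK subUset sub1set xB sK; split => //.
Qed.

Definition Sg (T : finType) (r : nat) (A : 'I_r -> {set T}) (Y : {set T}) : {set 'I_r} :=
  [set i | A i :&: Y != set0].
Definition Fg (T : finType) (r : nat) (A : 'I_r -> {set T}) (Y : {set T}) : {set 'I_r} :=
  [set i | A i \subset Y].
Definition AU (T : finType) (r : nat) (A : 'I_r -> {set T}) (K : {set 'I_r}) : {set T} :=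
  \bigcup_(j in K) A j.

Lemma memA (T : finType) (r : nat) (A : 'I_r -> {set T}) :
  \bigcup_(i < r) A i = [set: T] -> forall x, exists i, x \in A i.
Proof.
move=> Hc x; have : x \in [set: T] by rewrite inE.
rewrite -Hc => /bigcupP [i _ xi]; by exists i.
Qed.

Lemma A_uniq (T : finType) (r : nat) (A : 'I_r -> {set T}) :
  (forall i j, i != j -> [disjoint A i & A j]) ->
  forall i j x, x \in A i -> x \in A j -> i = j.
Proof.
move=> Hd i j x xi xj; apply/eqP; apply/negP => /negP ij.
by rewrite (disjointFr (Hd _ _ ij) xi) in xj.
Qed.

Lemma A_ne0 (T : finType) (r : nat) (A : 'I_r -> {set T}) :
  (forall i, #|A i| = 2) -> forall i, exists x, x \in A i.
Proof. move=> Hc i; apply/card_gt0P; by rewrite Hc. Qed.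

Lemma FS (T : finType) (r : nat) (A : 'I_r -> {set T}) Y :
  (forall i, #|A i| = 2) -> Fg A Y \subset Sg A Y.
Proof.
move=> Hc; apply/subsetP => i; rewrite !inE => s.
case: (A_ne0 Hc i) => x xi; apply/set0Pn; exists x; by rewrite inE xi (subsetP s).
Qed.

Lemma S_rem (T : finType) (r : nat) (A : 'I_r -> {set T}) Y i :
  (forall i j, i != j -> [disjoint A i & A j]) ->
  Sg A (Y :\: A i) = Sg A Y :\ i.
Proof.
move=> Hd; apply/setP => j; rewrite !inE.
case: (eqVneq j i) => [->|ji] /=.
  apply/negbTE; rewrite negbK; apply/eqP/setP => z; rewrite !inE.
  by case: (z \in A i); rewrite ?andbF.
congr (~~ _); congr (_ == _); apply/setP => z; rewrite !inE.
case zj: (z \in A j) => //=.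
by rewrite (disjointFr (Hd _ _ ji) zj).
Qed.

Lemma F_rem (T : finType) (r : nat) (A : 'I_r -> {set T}) Y i :
  (forall i, #|A i| = 2) ->
  (forall i j, i != j -> [disjoint A i & A j]) ->
  Fg A (Y :\: A i) = Fg A Y :\ i.
Proof.
move=> Hc Hd; apply/setP => j; rewrite !inE subsetD.
case: (eqVneq j i) => [->|ji] /=.
  apply/negbTE; apply/negP => /andP[_ d].
  case: (A_ne0 Hc i) => x xi; have := disjointFr d xi; by rewrite xi.
by rewrite Hd // andbT.
Qed.

Lemma AI_sub1 (T : finType) (r : nat) (A : 'I_r -> {set T}) Y j e :
  (forall i, #|A i| = 2) -> j \notin Fg A Y -> e \in A j -> e \in Y ->
  A j :&: Y \subset [set e].
Proof.
move=> Hc jF ej eY; apply/subsetP => x; rewrite !inE => /andP[xj xY].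
apply/negP => /negP xe.
have h : [set e; x] == A j.
  rewrite eqEcard cards2 eq_sym xe Hc andbT.
  by apply/subsetP => z; rewrite !inE => /orP[]/eqP->.
move: jF; rewrite inE -(eqP h); apply/negP/negPn.
apply/subsetP => z; rewrite !inE => /orP[]/eqP-> //.
Qed.

Lemma card_compl (r : nat) (K : {set 'I_r}) : #|~: K| = r - #|K|.
Proof. have := cardsC K; rewrite card_ord; lia. Qed.

Lemma peel (T : finType) (M : matroid T) (t r : nat) (A : 'I_r -> {set T})
  (Y W : {set T}) (j : 'I_r) (e : T) :
  spike M t A -> j \in Sg A Y -> t - 1 <= #|~: Sg A Y| -> 1 <= t ->
  e \in A j -> e \in W -> W \subset Y -> W :&: A j \subset [set e] ->
  rk M (W :\ e) < rk M W.
Proof.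
case=> tr Hc Hd Hcov Hcc jS hK t1 ej eW WY WA.
case: (subset_card hK) => K [sK cK].
have jK : j \notin K by apply/negP => /(subsetP sK); rewrite inE jS.
have cJ : #|j |: K| = t by rewrite cardsU1 jK cK; lia.
case: (Hcc _ cJ) => _ cc.
apply: (rk_cocircuit cc) => //.
  by apply/bigcupP; exists j; rewrite ?setU11.
apply/subsetP => z /setIP [zW].
case/bigcupP => l /setU1P [->|lK] zl.
  by apply: (subsetP WA); rewrite inE zW.
have := subsetP sK _ lK; rewrite !inE negbK => /eqP h.
have : z \in A l :&: Y by rewrite inE zl (subsetP WY).
by rewrite h inE.
Qed.

Lemma lower (T : finType) (M : matroid T) (t r : nat) (A : 'I_r -> {set T}) :
  spike M t A -> 1 <= t -> t - 1 <= r - t + 1 ->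
  forall n (Y : {set T}), #|Sg A Y| = n ->
  minn #|Sg A Y| (r - t + 1) + minn #|Fg A Y| (t - 1) <= rk M Y.
Proof.
move=> HS t1 pq; have HS' := HS; case: HS' => tr Hc Hd Hcov Hcc.
elim=> [|n IH] Y hn.
  have := subset_leq_card (FS Y Hc); lia.
have cS := card_compl (Sg A Y).
have [SF | nSF] := boolP (Sg A Y \subset Fg A Y); last first.
  move: nSF; rewrite -setD_eq0 => /set0Pn [j /setDP [jS jF]].
  have hS' : #|Sg A (Y :\: A j)| = n.
    rewrite S_rem //; move: hn; rewrite (cardsD1 j (Sg A Y)) jS /= add1n; by case.
  have hF' : #|Fg A (Y :\: A j)| = #|Fg A Y|.
    by rewrite F_rem // (cardsD1 j (Fg A Y)) (negbTE jF).
  have IH' := IH _ hS'; rewrite hS' hF' in IH'.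
  have mono : rk M (Y :\: A j) <= rk M Y by apply: rk_mono; exact: subsetDl.
  case: (leqP n.+1 (r - t + 1)) => hq; last by lia.
  move: (jS); rewrite inE => /set0Pn [e]; rewrite inE => /andP[ej eY].
  have hp := peel (W := Y) HS jS ltac:(lia) t1 ej eY (subxx _)
     ltac:(by rewrite setIC; apply: AI_sub1).
  have : rk M (Y :\: A j) <= rk M (Y :\ e).
    by apply: rk_mono; apply: setDS; rewrite sub1set.
  lia.
have eqFS : #|Fg A Y| = #|Sg A Y|.
  by apply/eqP; rewrite eqn_leq (subset_leq_card SF) (subset_leq_card (FS Y Hc)).
have : 0 < #|Sg A Y| by rewrite hn.
case/card_gt0P => i iS.
have iF := subsetP SF _ iS.
have hS' : #|Sg A (Y :\: A i)| = n by rewrite S_rem //; move: hn; rewrite (cardsD1 i (Sg A Y)) iS /= add1n; by case.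
have hF' : #|Fg A (Y :\: A i)| = n.
  have := cardsD1 i (Fg A Y); rewrite iF eqFS hn /= add1n => -[] ->.
  by rewrite F_rem.
have IH' := IH _ hS'; rewrite hS' hF' in IH'.
have AiY : A i \subset Y by rewrite inE in iF.
have mono : rk M (Y :\: A i) <= rk M Y by apply: rk_mono; exact: subsetDl.
have /cards2P [x [y [xy Ai]]] : #|A i| == 2 by rewrite Hc.
case: (leqP t n.+1) => ht.
  case: (leqP n.+1 (r - t + 1)) => hq; last by lia.
  have yA : y \in A i by rewrite Ai !inE eqxx orbT.
  have yW : y \in Y :\ x by rewrite !inE eq_sym xy (subsetP AiY).
  have WA : (Y :\ x) :&: A i \subset [set y].
    apply/subsetP => z; rewrite Ai !inE => /andP[/andP[zx _] /orP[] zz] //.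
    by rewrite zz in zx.
  have hp := peel (W := Y :\ x) HS iS ltac:(lia) t1 yA yW (subsetDl _ _) WA.
  have m1 : rk M (Y :\ x) <= rk M Y by apply: rk_mono; exact: subsetDl.
  have m2 : rk M (Y :\: A i) <= rk M ((Y :\ x) :\ y).
    apply: rk_mono; apply/subsetP => z; rewrite Ai !inE negb_or => /andP[/andP[-> ->] ->].
    done.
  lia.
have : t - n.+1 <= #|~: Fg A Y| by rewrite card_compl; lia.
case/subset_card => K [sK cK].
have dKF : K :&: Fg A Y = set0.
  by apply/eqP; rewrite setI_eq0 disjoints_subset.
have cJ : #|K :|: Fg A Y| = t.
  have := cardsUI K (Fg A Y); rewrite dKF cards0; lia.
case: (Hcc _ cJ) => [/andP [_ /forallP pC] _].
have iY : indep M Y.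
  apply: (implyP (pC Y)).
  rewrite properE; apply/andP; split.
    apply/subsetP => z zY; case: (memA Hcov z) => l zl.
    apply/bigcupP; exists l => //.
    rewrite inE; apply/orP; right; apply: (subsetP SF).
    by rewrite inE; apply/set0Pn; exists z; rewrite inE zl zY.
  have : 0 < #|K| by rewrite cK; lia.
  case/card_gt0P => j jK; case: (A_ne0 Hc j) => w wj.
  apply/negP => /subsetP h.
  have wY : w \in Y by apply: h; apply/bigcupP; exists j; rewrite // inE jK.
  have := subsetP sK _ jK; rewrite inE (subsetP SF) //.
  by rewrite inE; apply/set0Pn; exists w; rewrite inE wj wY.
have r1 := rk_indep iY.
have r2 := rk_indep (indep_sub (subsetDl Y (A i)) iY).
have := cardsID (A i) Y; rewrite (setIidPr AiY) Hc.
lia.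
Qed.

Definition nS (T : finType) (r : nat) (A : 'I_r -> {set T}) (Y : {set T}) := #|Sg A Y|.
Definition nF (T : finType) (r : nat) (A : 'I_r -> {set T}) (Y : {set T}) := #|Fg A Y|.

Lemma cardS_rem (T : finType) (r : nat) (A : 'I_r -> {set T}) (Y : {set T}) (i : 'I_r) :
  (forall i j, i != j -> [disjoint A i & A j]) ->
  nS A Y = (i \in Sg A Y) + nS A (Y :\: A i).
Proof. move=> Hd; rewrite /nS S_rem //; exact: cardsD1. Qed.

Lemma cardF_rem (T : finType) (r : nat) (A : 'I_r -> {set T}) (Y : {set T}) (i : 'I_r) :
  (forall i, #|A i| = 2) ->
  (forall i j, i != j -> [disjoint A i & A j]) ->
  nF A Y = (i \in Fg A Y) + nF A (Y :\: A i).
Proof. move=> Hc Hd; rewrite /nF F_rem //; exact: cardsD1. Qed.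

Lemma card_bound (T : finType) (r : nat) (A : 'I_r -> {set T}) :
  (forall i, #|A i| = 2) ->
  (forall i j, i != j -> [disjoint A i & A j]) ->
  \bigcup_(i < r) A i = [set: T] ->
  forall n Y, nS A Y = n -> #|Y| <= n + nF A Y.
Proof.
move=> Hc Hd Hcov; elim=> [|n IH] Y hn.
  case: (leqP #|Y| 0) => [h|/card_gt0P [z zY]]; first lia.
  case: (memA Hcov z) => l zl.
  have : l \in Sg A Y by rewrite inE; apply/set0Pn; exists z; rewrite inE zl zY.
  move=> lS; have : 0 < #|Sg A Y| by apply/card_gt0P; exists l.
  by move: hn; rewrite /nS => ->.
have : 0 < #|Sg A Y| by move: hn; rewrite /nS => ->.
case/card_gt0P => i iS.
have h1 := cardS_rem Y i Hd.
rewrite iS hn /= in h1.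
have h2 := cardF_rem Y i Hc Hd.
have IH' := IH (Y :\: A i) ltac:(lia).
have h3 := cardsID (A i) Y.
have h4 : #|Y :&: A i| <= 2 by rewrite -(Hc i); apply: subset_leq_card; exact: subsetIr.
have h5 : i \notin Fg A Y -> #|Y :&: A i| <= 1.
  move=> iF; case: (leqP #|Y :&: A i| 1) => // h.
  have : Y :&: A i == A i by rewrite eqEcard subsetIr Hc.
  by move/eqP => e; move: iF; rewrite inE -e subsetIl.
case: (boolP (i \in Fg A Y)) => iF.
  rewrite iF /= in h2. lia.
rewrite (negbTE iF) /= in h2; have := h5 iF; lia.
Qed.

Lemma upper (T : finType) (M : matroid T) (t r : nat) (A : 'I_r -> {set T}) :
  spike M t A -> 1 <= t ->
  forall n (K : {set 'I_r}), #|K| = n ->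
  rk M (AU A K) <= n + minn n (t - 1).
Proof.
move=> HS t1; have HS' := HS; case: HS' => tr Hc Hd Hcov Hcc.
elim=> [|n IH] K hn.
  have -> : K = set0 by apply/eqP; rewrite -cards_eq0 hn.
  by rewrite /AU big_set0 (rk_indep (indep0 M)) cards0.
have : 0 < #|K| by rewrite hn.
case/card_gt0P => i iK.
have hK' : #|K :\ i| = n by move: hn; rewrite (cardsD1 i K) iK /= add1n; case.
have IH' := IH _ hK'.
have /cards2P [x [y [xy Ai]]] : #|A i| == 2 by rewrite Hc.
have sub1 : AU A K \subset x |: (y |: AU A (K :\ i)).
  rewrite /AU; apply/subsetP => z /bigcupP [l lK zl].
  case: (eqVneq l i) => [li|li].
    by move: zl; rewrite li Ai !inE => /orP[]->; rewrite ?orbT.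
  rewrite !inE; apply/orP; right; apply/orP; right.
  by apply/bigcupP; exists l; rewrite // !inE li lK.
case: (ltnP n (t - 1)) => ht.
  have := rk_mono M sub1.
  have := rk_add1 M x (y |: AU A (K :\ i)).
  have := rk_add1 M y (AU A (K :\ i)).
  lia.
have : t - 1 <= #|K :\ i| by rewrite hK'.
case/subset_card => K0 [sK0 cK0].
have iK0 : i \notin K0 by apply/negP => /(subsetP sK0); rewrite !inE eqxx.
have cJ : #|i |: K0| = t.
  rewrite cardsU1 iK0 cK0 /=; lia.
case: (Hcc _ cJ) => cc _.
have yJ : y \in \bigcup_(j in i |: K0) A j.
  by apply/bigcupP; exists i; rewrite ?setU11 // Ai !inE eqxx orbT.
have sJK : \bigcup_(j in i |: K0) A j \subset AU A K.
  rewrite /AU; apply/subsetP => z /bigcupP [l lJ zl]; apply/bigcupP; exists l => //.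
  move: lJ; rewrite !inE => /orP[/eqP->//|lK0].
  by have := subsetP sK0 _ lK0; rewrite !inE => /andP[_ ->].
have h1 := rk_circuit cc yJ sJK.
have sub2 : (AU A K) :\ y \subset x |: AU A (K :\ i).
  apply/subsetP => z; rewrite in_setD1 => /andP[zy zK].
  have := subsetP sub1 _ zK; rewrite !inE (negbTE zy) /=.
  done.
have := rk_mono M sub2.
have := rk_add1 M x (AU A (K :\ i)).
lia.
Qed.

Lemma rkM_le (T : finType) (M : matroid T) (t r : nat) (A : 'I_r -> {set T}) :
  spike M t A -> 1 <= t -> t - 1 <= r - t -> rkM M <= r.
Proof.
move=> HS t1 hr; have HS' := HS; case: HS' => tr Hc Hd Hcov Hcc.
have : t <= #|[set: 'I_r]| by rewrite cardsT card_ord.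
case/subset_card => J0 [_ cJ0].
case: (Hcc _ cJ0) => _ /andP [_ /forallP pD].
have : 0 < #|J0| by rewrite cJ0.
case/card_gt0P => j jJ; case: (A_ne0 Hc j) => e ej.
have eD : e \in \bigcup_(j in J0) A j by apply/bigcupP; exists j.
have := pD ((\bigcup_(j in J0) A j) :\ e); rewrite properD1 //= => /eqP h.
have sub : ~: ((\bigcup_(j in J0) A j) :\ e) \subset e |: AU A (~: J0).
  apply/subsetP => z; rewrite !inE negb_and negbK => /orP [->//|zD].
  apply/orP; right; case: (memA Hcov z) => l zl.
  apply/bigcupP; exists l => //; rewrite inE; apply/negP => lJ.
  by move/negP: zD; apply; apply/bigcupP; exists l.
have := rk_mono M sub.
have := rk_add1 M e (AU A (~: J0)).
have := upper HS t1 (erefl #|~: J0|).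
rewrite card_compl cJ0 h.
lia.
Qed.

Theorem lemma6p5 (T : finType) (M : matroid T) (t r : nat) :
  2 <= t -> 4 * t - 4 <= r -> is_spike M t r -> n_connected M (2 * t - 1).
Proof.
move=> t2 hr [A HS]; have HS' := HS; case: HS' => tr Hc Hd Hcov Hcc.
move=> k X hk; apply/negP => /and3P [hc hX hZ].
have L1 := @lower T M t r A HS ltac:(lia) ltac:(lia) _ X (erefl _).
have L2 := @lower T M t r A HS ltac:(lia) ltac:(lia) _ (~: X) (erefl _).
have RM := rkM_le HS ltac:(lia) ltac:(lia).
have C1 := card_bound Hc Hd Hcov (erefl (nS A X)).
have C2 := card_bound Hc Hd Hcov (erefl (nS A (~: X))).
rewrite /nS /nF in C1 C2.
have SC : Sg A (~: X) = ~: Fg A X.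
  apply/setP => i; rewrite !inE -setD_eq0 setDE //.
have FC : Fg A (~: X) = ~: Sg A X.
  apply/setP => i; rewrite !inE -disjoints_subset -setI_eq0 negbK //.
rewrite SC FC !card_compl in L2 C2.
have aS := subset_leq_card (FS X Hc).
have Sr : #|Sg A X| <= r.
  by have := subset_leq_card (subsetT (Sg A X)); rewrite cardsT card_ord.
move: hc; rewrite /conn.
lia.
Qed.
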